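(* Let $\Theta=\{\theta_1,\dots,\theta_N\}$ be a finite set of $N\ge 1$ distinct elements, and let $PES(\Theta)=\{A_{ij} : i=0,\dots,N;\ j=1,\dots,P(N,i)\}$ be its permutation event space, where $P(N,i)=\frac{N!}{(N-i)!}$. For $i\ge 0$ let $F(i)=\sum_{k=0}^{i}P(i,k)=\sum_{k=0}^{i}\frac{i!}{(i-k)!}$. For a permutation mass function $\mathscr{M}$ on $PES(\Theta)$ define $$H_{RPS}(\mathscr{M})=-\sum_{i=1}^{N}\sum_{j=1}^{P(N,i)}\mathscr{M}(A_{ij})\log\left(\frac{\mathscr{M}(A_{ij})}{F(i)-1}\right).$$ Then the maximum of $H_{RPS}(\mathscr{M})$ over all permutation mass functions $\mathscr{M}$ on $PES(\Theta)$ equals $$H_{\max\text{-}RPS}=\log\left(\sum_{i=1}^{N}P(N,i)\,(F(i)-1)\right).$$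
   Context: The permutation event space $PES(\Theta)$ is the set of all ordered tuples of distinct elements of $\Theta$ (including the empty tuple $\emptyset=A_{01}$): for each $i\in\{0,\dots,N\}$, the tuples of length $i$ are enumerated as $A_{i1},\dots,A_{i,P(N,i)}$. A permutation mass function (PMF) is a map $\mathscr{M}:PES(\Theta)\to[0,1]$ with $\mathscr{M}(\emptyset)=0$ and $\sum_{A\in PES(\Theta)}\mathscr{M}(A)=1$. The logarithm has a fixed base $b>1$, and the convention $0\log 0=0$ is used. *)

(* Defs.v *)
From HB Require Import structures.
From mathcomp Require Import all_boot all_order all_algebra.
From mathcomp Require Import all_classical all_reals all_analysis.
Set Implicit Arguments. Unset Strict Implicit. Unset Printing Implicit Defensive.
Import Order.TTheory GRing.Theory Num.Theory.
Local Open Scope ring_scope.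

(* Permutation event space: ordered tuples of distinct elements of T, of
   every length k = 0..#|T|.  *)
Definition PES (T : finType) : finType :=
  {k : 'I_(#|T|).+1 & {t : k.-tuple T | uniq t}}.

Definition ev_len (T : finType) (A : PES T) : nat := tag A.

(* P(n,k) = n!/(n-k)! is the falling factorial n ^_ k;
   F(i) = sum_{k=0}^i P(i,k) *)
Definition Fsum (i : nat) : nat := (\sum_(k < i.+1) i ^_ k)%N.

Definition logb (R : realType) (b x : R) : R := ln x / ln b.

Definition is_PMF (R : realType) (T : finType) (M : PES T -> R) : Prop :=
  (forall A, 0 <= M A <= 1) /\
  (forall A, ev_len A = 0%N -> M A = 0) /\
  \sum_(A : PES T) M A = 1.

Definition H_term (R : realType) (b : R) (T : finType) (M : PES T -> R)
    (A : PES T) : R :=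
  if M A == 0 then 0
  else M A * logb b (M A / ((Fsum (ev_len A))%:R - 1)).

Definition H_RPS (R : realType) (b : R) (T : finType) (M : PES T -> R) : R :=
  - \sum_(A : PES T | (0 < ev_len A)%N) H_term b M A.

Definition H_max_RPS (R : realType) (b : R) (T : finType) : R :=
  logb b (\sum_(1 <= i < #|T|.+1) (#|T| ^_ i)%:R * ((Fsum i)%:R - 1)).

(* Main.v *)
Require Import Defs.
From mathcomp Require Import all_boot all_order all_algebra.
From mathcomp Require Import all_classical all_reals all_analysis.
From mathcomp Require Import ring lra.
Import Order.TTheory GRing.Theory Num.Theory.
Local Open Scope ring_scope.

Lemma Fsum_ge2 i : (0 < i)%N -> (2 <= Fsum i)%N.
Proof.
case: i => // j _; rewrite /Fsum !big_ord_recl ffactn0 /=.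
rewrite (_ : j.+1 ^_ (bump 0 0) = j.+1); last by rewrite /bump /= ffactn1.
rewrite addnA; apply: leq_trans (leq_addr _ _); by [].
Qed.

Lemma S_eq (R : realType) (T : finType) :
  \sum_(A : PES T | (0 < ev_len A)%N) (((Fsum (ev_len A))%:R : R) - 1) =
  \sum_(1 <= i < #|T|.+1) (#|T| ^_ i)%:R * ((Fsum i)%:R - 1).
Proof.
rewrite /ev_len.
transitivity (\sum_(i : 'I_(#|T|).+1 | (0 < i)%N)
   \sum_(j : {t : i.-tuple T | uniq t}) (((Fsum i)%:R : R) - 1)).
  rewrite (sig_big_dep (fun i : 'I_(#|T|).+1 => (0 < i)%N)
   (fun i (_ : {t : i.-tuple T | uniq t}) => true)
   (fun i _ => ((Fsum i)%:R : R) - 1)).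
  by apply: eq_bigl => p; rewrite andbT.
have hc : forall (i : nat) (c : R),
    \sum_(j : {t : i.-tuple T | uniq t}) c = c *+ (#|T| ^_ i)%N.
  move=> i c; rewrite sumr_const; congr (_ *+ _).
  rewrite -(card_uniq_tuples i predT) cardsE /=.
  transitivity #|[pred x : i.-tuple T | uniq x]|.
    exact: (card_sig (fun t : i.-tuple T => uniq t)).
  apply: eq_card => t; rewrite unfold_in /=.
  by apply/esym/andb_idl => _; apply/allP.
rewrite (eq_bigr (fun i : 'I_(#|T|).+1 => (#|T| ^_ i)%:R * ((Fsum i)%:R - 1))); last first.
  by move=> i _; rewrite hc -[_ *+ _]mulr_natr mulrC.
rewrite -(big_mkord (fun i => (0 < i)%N) (fun i => (#|T| ^_ i)%:R * ((Fsum i)%:R - 1))).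
rewrite big_ltn_cond //= [in RHS]big_nat_cond [in LHS]big_nat_cond.
apply: eq_bigl => i; rewrite andbT; apply/andb_idr => /andP[].
by [].
Qed.

Lemma w_ge1 (R : realType) i : (0 < i)%N -> (1 : R) <= (Fsum i)%:R - 1.
Proof.
move=> /Fsum_ge2 h; rewrite lerBrDr -[1 + 1]/(2%:R : R) ler_nat //.
Qed.

Theorem theorem4 (R : realType) (b : R) (hb : 1 < b) (T : finType)
    (hN : (0 < #|T|)%N) :
  (forall M : PES T -> R, is_PMF M -> H_RPS b M <= H_max_RPS b T) /\
  (exists M : PES T -> R, is_PMF M /\ H_RPS b M = H_max_RPS b T).
Proof.
have lb0 : 0 < ln b by apply: ln_gt0.
set w := fun A : PES T => ((Fsum (ev_len A))%:R : R) - 1.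
set S := \sum_(A : PES T | (0 < ev_len A)%N) w A.
have HS : H_max_RPS b T = ln S / ln b by rewrite /H_max_RPS /logb /S /w S_eq.
have wge1 : forall A, (0 < ev_len A)%N -> 1 <= w A by move=> A; apply: w_ge1.
have Spos : 0 < S.
  rewrite /S /w S_eq big_ltn ?ltnS //.
  apply: (@lt_le_trans _ _ ((#|T| ^_ 1)%:R * ((Fsum 1)%:R - 1))).
    rewrite ffactn1 mulr_gt0 // ?ltr0n //.
    by apply: (lt_le_trans ltr01); apply: w_ge1.
  rewrite lerDl big_nat; apply: sumr_ge0 => i /andP[hi _].
  apply: mulr_ge0; first exact: ler0n.
  apply: (le_trans ler01); apply: w_ge1; exact: ltnW.
have wleS : forall A, (0 < ev_len A)%N -> w A <= S.
  move=> A hA; rewrite /S (bigD1 A) //= lerDl.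
  by apply: sumr_ge0 => B /andP[hB _]; rewrite (le_trans ler01) // wge1.
rewrite HS; split.
- move=> M [M01 [M0 M1]].
  have sumQ : \sum_(A : PES T | (0 < ev_len A)%N) M A = 1.
    rewrite -M1 [RHS](bigID (fun A : PES T => (0 < ev_len A)%N)) /= [X in _ = _ + X]big1 ?addr0 //.
    by move=> A; rewrite -eqn0Ngt => /eqP; apply: M0.
  have term : forall A, (0 < ev_len A)%N ->
      - H_term b M A <= (M A * ln S + w A / S - M A) / ln b.
    move=> A hA; rewrite /H_term /logb.
    have wA := wge1 A hA; have w0 : 0 < w A by apply: lt_le_trans wA.
    have [MA0|MAn0] := eqVneq (M A) 0.
      rewrite MA0 oppr0 mul0r add0r addr0.
      by apply: divr_ge0; [apply: divr_ge0|]; apply: ltW.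
    have Mpos : 0 < M A by rewrite lt_def MAn0; case/andP: (M01 A).
    have key := le_ln1Dx (x := w A / (M A * S) - 1).
    rewrite addrCA subrr addr0 in key.
    have hX : 0 < w A / (M A * S) by apply: divr_gt0 => //; apply: mulr_gt0.
    have key2 : ln (w A / (M A * S)) <= w A / (M A * S) - 1 by apply: key; lra.
    rewrite ln_div ?posrE ?mulr_gt0 // lnM ?posrE // in key2.
    rewrite -/(w A) ln_div ?posrE //.
    have e1 : M A * (w A / (M A * S) - 1) = w A / S - M A.
      by field; apply/andP; split; rewrite gt_eqF.
    have key3 : M A * (ln (w A) - (ln (M A) + ln S)) <= w A / S - M A.
      by rewrite -e1; apply: ler_wpM2l => //; apply: ltW.
    rewrite (_ : - (M A * ((ln (M A) - ln (w A)) / ln b)) =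
                (M A * (ln (w A) - ln (M A))) / ln b); last by ring.
    rewrite ler_pM2r ?invr_gt0 //.
    nra.
  rewrite /H_RPS -sumrN.
  apply: le_trans (ler_sum _ term) _.
  rewrite -mulr_suml !big_split /= sumrN -mulr_suml -mulr_suml sumQ.
  by rewrite (_ : \sum_(i | (0 < ev_len i)%N) w i = S) // divff ?gt_eqF // mul1r addrK.
- exists (fun A => if (0 < ev_len A)%N then w A / S else 0); split.
    split; [|split].
    + move=> A; case: ifP => hA; last by rewrite lexx ler01.
      apply/andP; split.
        by apply: divr_ge0; [apply: (le_trans ler01); apply: wge1 | apply: ltW].
      by rewrite ler_pdivrMr // mul1r wleS.
    + by move=> A ->.
    + rewrite (bigID (fun A : PES T => (0 < ev_len A)%N)) /= [X in _ + X]big1; last first.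
        by move=> A /negbTE ->.
      rewrite addr0 (eq_bigr (fun A => w A / S)); last by move=> A ->.
      by rewrite -mulr_suml divff // gt_eqF.
  rewrite /H_RPS (eq_bigr (fun A => - (ln S / ln b) * (w A / S))); last first.
    move=> A hA; rewrite /H_term hA.
    have w0 : 0 < w A by apply: lt_le_trans (wge1 A hA).
    rewrite mulf_eq0 invr_eq0 !gt_eqF //= /logb.
    rewrite (_ : w A / S / ((Fsum (ev_len A))%:R - 1) = S^-1); last first.
      by rewrite -/(w A); field; apply/andP; split; rewrite gt_eqF.
    rewrite lnV ?posrE //; ring.
  by rewrite -mulr_sumr -mulr_suml divff ?gt_eqF // mulr1 opprK.
Qed.
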